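(* In the setting described in the context, the decoding subgraph of any reliable logical Pauli product has edge degree at most two (every elementary error flips at most two checks of the subgraph) and vertex degree bounded by a constant $O(1)$ (the number of elementary errors flipping any given check of the subgraph is bounded independently of $d$ and of the circuit).
   Context: Setting: logical qubits encoded in distance-$d$ unrotated surface codes, initialized in $|\overline{0}\rangle$, $|\overline{+}\rangle$ (by preparing all physical qubits in $|0\rangle$ resp. $|+\rangle$) or in magic states $|\overline T\rangle$ with reliable ($+1$) stabilizers; logical Clifford gates implemented (fold-)transversally (Pauli and $\overline{\mathrm{CNOT}}$ transversally; $\overline H$ by physical $H$ plus reflection about the lattice diagonal; $\overline S$ by $S$/$S^\dagger$ on diagonal qubits and $CZ$ between qubit pairs related by reflection about the diagonal), each followed by one round of stabilizer measurement (SE); logical $\overline Z$/$\overline X$ measurements by measuring all data qubits in $Z$/$X$. Elementary errors: single-qubit Pauli $X$ and $Z$ errors on data qubits before each SE round and on input magic states, and flips of syndrome measurement outcomes. Reliable logical Pauli product: with $n$ logical qubits and $m$ measurements, a measurement product $\vec v\in\mathbb{Z}_2^m$ is reliable if $M\vec v\in\operatorname{span}B$, where $M\in\mathbb{Z}_2^{2n\times m}$ has entry $(i,j)$ (resp. $(n+i,j)$) equal to $1$ iff the back-propagation of measurement $j$ to initialization has an $\overline X$- (resp. $\overline Z$-) component on qubit $i$, and $B$ contains the unit vectors $\vec e_{x,i}$ (position $i$) and $\vec e_{z,i}$ (position $n+i$) for a $|\overline T\rangle$ qubit $i$, only $\vec e_{z,i}$ for a $|\overline 0\rangle$ qubit,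 only $\vec e_{x,i}$ for a $|\overline +\rangle$ qubit. Checks: each stabilizer measurement at an SE round is multiplied with the measured value(s) of its back-propagation through the preceding gate at the previous SE round (at the first round, a deterministically-$+1$ initial stabilizer is itself a check). Decoding subgraph of $\overline P$: back-propagate $\overline P$ to get $\overline P^t=\overline O_1^t\otimes\cdots\otimes\overline O_n^t$ at each time step $t$; its vertices are the $X$-type checks of qubit $j$ at step $t$ when $\overline O_j^t\in\{\overline X,\overline Y\}$ and the $Z$-type checks when $\overline O_j^t\in\{\overline Z,\overline Y\}$; its (hyper)edges are the elementary errors flipping at least one included check, each connecting the included checks it flips. *)

(* Defs.v *)
From HB Require Import structures.
From mathcomp Require Import all_boot all_order all_algebra.
Set Implicit Arguments. Unset Strict Implicit. Unset Printing Implicit Defensive.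
Import GRing.Theory.

Inductive istate := IZero | IPlus | IT.

(* logical gates: Paulis X^x Z^z, H, S, CNOT (control c, target t) *)
Inductive gate (n : nat) :=
| GPauli (i : 'I_n) (x z : bool)
| GH (i : 'I_n)
| GS (i : 'I_n)
| GCNOT (c t : 'I_n).

(* operations of a layer; [OMeas i bx]: logical measurement of qubit i in
   the X basis if bx = true, in the Z basis if bx = false. *)
Inductive op (n : nat) :=
| OInit (i : 'I_n) (s : istate)
| OGate (g : gate n)
| OMeas (i : 'I_n) (bx : bool).

(* A circuit on n logical qubits is a list of layers [L : seq (seq (op n))].
   Layer t is followed by SE round t on all active qubits. *)

Definition supp_gate n (g : gate n) : seq 'I_n :=
  match g with
  | GPauli i _ _ => [:: i] | GH i => [:: i] | GS i => [:: i]
  | GCNOT c t => [:: c; t]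
  end.

Definition supp_op n (o : op n) : seq 'I_n :=
  match o with OInit i _ => [:: i] | OGate g => supp_gate g | OMeas i _ => [:: i] end.

Definition is_init_of n (i : 'I_n) (o : op n) : bool :=
  if o is OInit j _ then j == i else false.
Definition is_meas_of n (i : 'I_n) (o : op n) : bool :=
  if o is OMeas j _ then j == i else false.
Definition touches_gate n (i : 'I_n) (o : op n) : bool :=
  if o is OGate g then i \in supp_gate g else false.

(* layer of initialization / of measurement (size L if never measured) *)
Definition initL n (L : seq (seq (op n))) (i : 'I_n) : nat := find (has (is_init_of i)) L.
Definition measL n (L : seq (seq (op n))) (i : 'I_n) : nat := find (has (is_meas_of i)) L.

Definition active n (L : seq (seq (op n))) (i : 'I_n) (t : nat) : bool :=
  (initL L i <= t) && (t < measL L i).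

Definition layer_ok n (ly : seq (op n)) : bool := uniq (flatten (map (@supp_op n) ly)).

Definition well_formed n (L : seq (seq (op n))) : Prop :=
  all (@layer_ok n) L /\
  forall i : 'I_n,
    count (has (is_init_of i)) L = 1 /\
    count (has (is_meas_of i)) L <= 1 /\
    initL L i < measL L i /\
    (forall t, t < size L -> has (touches_gate i) (nth [::] L t) ->
       initL L i < t < measL L i).

Definition init_of n (i : 'I_n) (o : op n) : option istate :=
  if o is OInit j s then (if j == i then Some s else None) else None.
Definition init_state n (L : seq (seq (op n))) (i : 'I_n) : istate :=
  head IZero (pmap (init_of i) (flatten L)).

(* list of logical measurements (qubit index, X-basis?, layer) *)
Definition meas_of n (o : op n) : option (nat * bool) :=
  if o is OMeas i b then Some (nat_of_ord i, b) else None.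
Definition mlist n (L : seq (seq (op n))) : seq (nat * bool * nat) :=
  flatten [seq [seq (qb.1, qb.2, t) | qb <- pmap (@meas_of n) (nth [::] L t)]
          | t <- iota 0 (size L)].
Definition nmeas n (L : seq (seq (op n))) : nat := size (mlist L).
Definition mnth n (L : seq (seq (op n))) (j : nat) : nat * bool * nat :=
  nth (0, false, 0) (mlist L) j.

(* Logical Paulis (binary symplectic representation, signs ignored)   *)

Definition b2F (b : bool) : 'F_2 := (b%:R)%R.

Record lpauli (n : nat) := LP { lx : 'I_n -> bool ; lz : 'I_n -> bool }.

(* conjugation of a logical Pauli by a logical gate (involutive on the
   symplectic representation, so it serves for back-propagation) *)
Definition lconj n (g : gate n) (P : lpauli n) : lpauli n :=
  match g with
  | GPauli _ _ _ => P
  | GH i => LP (fun j => if j == i then lz P j else lx P j)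
               (fun j => if j == i then lx P j else lz P j)
  | GS i => LP (lx P) (fun j => lz P j (+) ((j == i) && lx P j))
  | GCNOT c t => LP (fun j => lx P j (+) ((j == t) && lx P c))
                    (fun j => lz P j (+) ((j == c) && lz P t))
  end.

Definition layer_lconj n (ly : seq (op n)) (P : lpauli n) : lpauli n :=
  foldr (fun o P => if o is OGate g then lconj g P else P) P ly.

(* back-propagation through layers hi, hi-1, ..., lo (in this order) *)
Definition bp n (L : seq (seq (op n))) (lo hi : nat) (P : lpauli n) : lpauli n :=
  foldl (fun P s => layer_lconj (nth [::] L s) P) P (rev (iota lo (hi.+1 - lo))).

Definition obs n (q : nat) (bx : bool) : lpauli n :=
  if bx then LP (fun i : 'I_n => i == q :> nat) (fun _ => false)
  else LP (fun _ => false) (fun i : 'I_n => i == q :> nat).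

(* the matrix M in Z_2^{2n x m}: entry (i,j) / (n+i,j) is the X- / Z-component
   on qubit i of the back-propagation of measurement j to the initialization
   of qubit i (zero if qubit i is initialized after measurement j). *)
Definition Mmat n (L : seq (seq (op n))) : 'M['F_2]_(n + n, nmeas L) :=
  \matrix_(r, j)
    (let: (q, bx, tj) := mnth L j in
     match split r with
     | inl i => b2F ((initL L i < tj) && lx (bp L (initL L i).+1 tj (obs n q bx)) i)
     | inr i => b2F ((initL L i < tj) && lz (bp L (initL L i).+1 tj (obs n q bx)) i)
     end).

(* is the unit vector at position r in B ? *)
Definition in_B n (L : seq (seq (op n))) (r : 'I_(n + n)) : bool :=
  match split r with
  | inl i => if init_state L i is IZero then false else true
  | inr i => if init_state L i is IPlus then false else true
  end.

(* matrix whose nonzero rows are exactly the vectors of B *)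
Definition Bmat n (L : seq (seq (op n))) : 'M['F_2]_(n + n) :=
  \matrix_(r, c) b2F ((r == c) && in_B L r).

Definition reliable n (L : seq (seq (op n))) (v : 'cV['F_2]_(nmeas L)) : Prop :=
  (trmx (Mmat L *m v) <= Bmat L)%MS.
Arguments reliable {n} L v.

(* back-propagation of the product P-bar of the measurements in v to the
   time of SE round t *)
Definition Pbar n (L : seq (seq (op n))) (v : 'cV['F_2]_(nmeas L)) (t : nat) : lpauli n :=
  LP (fun i => \big[addb/false]_(j < nmeas L | v j ord0 != 0%R)
                 (let: (q, bx, tj) := mnth L j in
                  (t < tj) && lx (bp L t.+1 tj (obs n q bx)) i))
     (fun i => \big[addb/false]_(j < nmeas L | v j ord0 != 0%R)
                 (let: (q, bx, tj) := mnth L j in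
                  (t < tj) && lz (bp L t.+1 tj (obs n q bx)) i)).
Arguments Pbar {n} L v t.

(* positions (r,c) in a (2d-1) x (2d-1) grid: data qubits at r+c even,
   Z-stabilizers at (odd, even), X-stabilizers at (even, odd). *)
Definition pos (d : nat) := ('I_(d.*2.-1) * 'I_(d.*2.-1))%type.

Definition isData d (p : pos d) : bool := ~~ odd (p.1 + p.2).
Definition isZs d (p : pos d) : bool := odd p.1 && ~~ odd p.2.
Definition isXs d (p : pos d) : bool := ~~ odd p.1 && odd p.2.
Definition adj d (p q : pos d) : bool :=
  ((p.1 == q.1 :> nat) && ((p.2.+1 == q.2 :> nat) || (q.2.+1 == p.2 :> nat))) ||
  ((p.2 == q.2 :> nat) && ((p.1.+1 == q.1 :> nat) || (q.1.+1 == p.1 :> nat))).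
Definition refl d (p : pos d) : pos d := (p.2, p.1).

(* physical Pauli on all n code blocks (symplectic, signs ignored) *)
Record ppauli (d n : nat) := PP { px : 'I_n -> pos d -> bool ; pz : 'I_n -> pos d -> bool }.

Definition gen d n (i : 'I_n) (s : pos d) : ppauli d n :=
  PP (fun j q => (j == i) && isXs s && adj s q) (fun j q => (j == i) && isZs s && adj s q).

Definition anticomm d n (E F : ppauli d n) : bool :=
  \big[addb/false]_(j : 'I_n) \big[addb/false]_(q : pos d)
     ((px E j q && pz F j q) (+) (pz E j q && px F j q)).

(* conjugation of physical Paulis by the (fold-)transversal implementation
   of a logical gate *)
Definition pconj d n (g : gate n) (E : ppauli d n) : ppauli d n :=
  match g with
  | GPauli _ _ _ => E
  | GH i => PP (fun j q => if j == i then pz E j (refl q) else px E j q)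
               (fun j q => if j == i then px E j (refl q) else pz E j q)
  | GS i => PP (px E) (fun j q => pz E j q (+) ((j == i) && px E j (refl q)))
  | GCNOT c t => PP (fun j q => px E j q (+) ((j == t) && px E c q))
                    (fun j q => pz E j q (+) ((j == c) && pz E t q))
  end.

Definition layer_pconj d n (ly : seq (op n)) (E : ppauli d n) : ppauli d n :=
  foldr (fun o E => if o is OGate g then pconj g E else E) E ly.

(* forward propagation of a physical Pauli from just before SE round u to
   SE round t (through layers u+1, ..., t) *)
Definition fwd d n (L : seq (seq (op n))) (u t : nat) (E : ppauli d n) : ppauli d n :=
  foldl (fun E s => layer_pconj (nth [::] L s) E) E (iota u.+1 (t - u)).

(* single-qubit X (bx = true) or Z error on data qubit q of block i *)
Definition single d n (i : 'I_n) (q : pos d) (bx : bool) : ppauli d n :=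
  PP (fun j p => bx && (j == i) && (p == q)) (fun j p => ~~ bx && (j == i) && (p == q)).

(* representative of logical X-bar (column 0) / Z-bar (row 0) of block i *)
Definition logrep d n (i : 'I_n) (bx : bool) : ppauli d n :=
  PP (fun j (p : pos d) => bx && (j == i) && (p.2 == 0 :> nat) && ~~ odd p.1)
     (fun j (p : pos d) => ~~ bx && (j == i) && (p.1 == 0 :> nat) && ~~ odd p.2).

(* checks: (round t, logical qubit i, stabilizer site s) *)
Definition chk d n T := ('I_T * 'I_n * pos d)%type.

(* elementary errors:
   inl (inl (t,i,q,bx)) : X (bx) / Z error on data qubit q of block i before SE round t
   inl (inr (t,i,s))    : flip of the outcome of stabilizer s of block i at SE round t
   inr (i,bx)           : X (bx) / Z error on the input magic state i *)
Definition err d n T :=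
  (('I_T * 'I_n * pos d * bool) + ('I_T * 'I_n * pos d) + ('I_n * bool))%type.

Definition is_err d n (L : seq (seq (op n))) (e : err d n (size L)) : bool :=
  match e with
  | inl (inl (t, i, q, _)) => active L i t && isData q
  | inl (inr (t, i, s)) => active L i t && (isXs s || isZs s)
  | inr (i, _) => if init_state L i is IT then true else false
  end.
Arguments is_err {d n} L e.

(* does error e flip the outcome of the measurement of stabilizer s of
   block i at SE round t ? *)
Definition mflip d n (L : seq (seq (op n))) (e : err d n (size L))
    (me : nat * 'I_n * pos d) : bool :=
  let: (t, i, s) := me in
  match e with
  | inl (inl (u, i', q, bx)) =>
      (u <= t) && anticomm (fwd L u t (single i' q bx)) (gen i s)
  | inl (inr (u, i', s')) => (u == t :> nat) && (i' == i) && (s' == s)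
  | inr (i', bx) =>
      (initL L i' <= t) && anticomm (fwd L (initL L i') t (logrep d i' bx)) (gen i s)
  end.
Arguments mflip {d n} L e me.

Definition gate_of n (o : op n) : option (gate n) := if o is OGate g then Some g else None.

(* generators (at the previous SE round) whose product is the back-propagation
   of the stabilizer generator (i,s) through the layer ly *)
Definition bpgen d n (ly : seq (op n)) (i : 'I_n) (s : pos d) : seq ('I_n * pos d) :=
  match head None [seq Some g | g <- pmap (@gate_of n) ly & i \in supp_gate g] with
  | Some (GH _) => [:: (i, refl s)]
  | Some (GS _) => if isXs s then [:: (i, s); (i, refl s)] else [:: (i, s)]
  | Some (GCNOT c tg) =>
      if ((i == tg) && isZs s) || ((i == c) && isXs s) then [:: (c, s); (tg, s)]
      else [:: (i, s)]
  | _ => [:: (i, s)]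
  end.

Definition deterministic d (st : istate) (s : pos d) : bool :=
  match st with IZero => isZs s | IPlus => isXs s | IT => true end.

Definition is_check d n (L : seq (seq (op n))) (c : chk d n (size L)) : bool :=
  let: (t, i, s) := c in
  active L i t && (isXs s || isZs s) &&
  ((t == initL L i :> nat) ==> deterministic (init_state L i) s).
Arguments is_check {d n} L c.

(* the measurements whose product is the check *)
Definition check_meas d n (L : seq (seq (op n))) (c : chk d n (size L))
    : seq (nat * 'I_n * pos d) :=
  let: (t, i, s) := c in
  (nat_of_ord t, i, s) ::
  (if t == initL L i :> nat then [::]
   else [seq (t.-1, ij.1, ij.2) | ij <- bpgen (nth [::] L t) i s]).
Arguments check_meas {d n} L c.

Definition flips d n (L : seq (seq (op n))) (e : err d n (size L)) (c : chk d n (size L)) : bool :=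
  foldr (fun me b => mflip L e me (+) b) false (check_meas L c).
Arguments flips {d n} L e c.

(* vertices of the decoding subgraph of the product of the measurements in v *)
Definition included d n (L : seq (seq (op n))) (v : 'cV['F_2]_(nmeas L))
    (c : chk d n (size L)) : bool :=
  is_check L c &&
  (let: (t, i, s) := c in
   if isXs s then lx (Pbar L v t) i else lz (Pbar L v t) i).
Arguments included {d n} L v c.

(* Main.v *)
Require Import Defs.
From mathcomp Require Import all_boot all_order all_algebra.
From mathcomp Require Import zify.
Set Implicit Arguments. Unset Strict Implicit. Unset Printing Implicit Defensive.


Definition gate_at n (ly : seq (op n)) (k : 'I_n) : option (gate n) :=
  head None [seq Some g | g <- pmap (@gate_of n) ly & k \in supp_gate g].

Lemma gate_at_cons n (o : op n) ly k :
  gate_at (o :: ly) k =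
  (if o is OGate g then (if k \in supp_gate g then Some g else gate_at ly k)
   else gate_at ly k).
Proof. by case: o => //= g; rewrite /gate_at /=; case: (k \in supp_gate g). Qed.

Definition suppL n (ly : seq (op n)) := flatten (map (@supp_op n) ly).

Lemma gate_at_supp n (ly : seq (op n)) k g :
  gate_at ly k = Some g -> (k \in supp_gate g) /\ {subset supp_gate g <= suppL ly}.
Proof.
elim: ly => //= o ly IH; rewrite gate_at_cons.
case: o => [i s|g0|i b] /=; try (move/IH=> [h1 h2]; split=> // x hx;
   by rewrite mem_cat h2 ?orbT).
case: ifP => hk.
  by case=> <-; split=> // x hx; rewrite mem_cat hx.
by move/IH=> [h1 h2]; split=> // x hx; rewrite mem_cat h2 ?orbT.
Qed.

Lemma gate_at_none n (ly : seq (op n)) k : k \notin suppL ly -> gate_at ly k = None.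
Proof.
case h: (gate_at ly k) => [g|] //; move/gate_at_supp: h => [h1 h2].
by rewrite h2.
Qed.

Lemma gate_at_notouch n (ly : seq (op n)) k : ~~ has (touches_gate k) ly -> gate_at ly k = None.
Proof.
elim: ly => //= o ly IH; rewrite negb_or => /andP [h1 h2]; rewrite gate_at_cons.
case: o h1 => [i s|g|i b] /= h1; try by apply: IH.
by rewrite (negbTE h1); apply: IH.
Qed.

Lemma gate_at_uniq n (ly : seq (op n)) j k g :
  layer_ok ly -> gate_at ly j = Some g -> k \in supp_gate g -> gate_at ly k = Some g.
Proof.
rewrite /layer_ok; elim: ly => //= o ly IH; rewrite cat_uniq => /and3P [u1 u2 u3].
rewrite !gate_at_cons.
case: o u1 u2 => [i s|g0|i b] /= u1 u2; try (move=> h hk; apply: IH => //).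
case: ifP => hj.
  by case=> <- ->.
move=> h hk; have [_ h2] := gate_at_supp h.
have hks : k \in suppL ly by apply: h2.
have -> : (k \in supp_gate g0) = false.
  apply/negP => hk0; move/hasP: u2; apply; by exists k.
exact: IH.
Qed.

Lemma gate_uniq_supp n (ly : seq (op n)) k g :
  layer_ok ly -> gate_at ly k = Some g -> uniq (supp_gate g).
Proof.
rewrite /layer_ok; elim: ly => //= o ly IH; rewrite cat_uniq => /and3P [u1 u2 u3].
rewrite gate_at_cons; case: o u1 u2 => [i s|g0|i b] /= u1 u2; try (by apply: IH).
by case: ifP => _; [case=> <- | apply: IH].
Qed.

Lemma gate_at_meas n (ly : seq (op n)) k g :
  layer_ok ly -> gate_at ly k = Some g -> ~~ has (is_meas_of k) ly.
Proof.
rewrite /layer_ok; elim: ly => //= o ly IH; rewrite cat_uniq => /and3P [u1 u2 u3].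
rewrite gate_at_cons.
have memS : forall ly' : seq (op n), has (is_meas_of k) ly' -> k \in suppL ly'.
  elim=> //= o' l' IH' /orP [|/IH' h]; last by rewrite mem_cat h orbT.
  by case: o' => //= i b /eqP ->; rewrite mem_cat inE eqxx.
case: o u1 u2 => [i s|g0|i b] /= u1 u2.
- by apply: IH.
- case: ifP => hk.
    case=> _; apply/negP => /memS hk'.
    by move/hasP: u2; apply; exists k.
  by apply: IH.
- move=> h; rewrite (negbTE (IH u3 h)) orbF; apply/eqP => eik.
  have [_ h2] := gate_at_supp h; have [h1 _] := gate_at_supp h.
  move/hasP: u2; apply; exists k; first by apply: h2.
  by rewrite eik inE.
Qed.

Definition agree_blk d n (E F : ppauli d n) (k : 'I_n) :=
  forall q, px E k q = px F k q /\ pz E k q = pz F k q.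

Lemma agree_trans d n (E F G : ppauli d n) k :
  agree_blk E F k -> agree_blk F G k -> agree_blk E G k.
Proof. by move=> h1 h2 q; case: (h1 q) => -> ->; apply: h2. Qed.

Lemma pconj_out d n (g : gate n) (E : ppauli d n) k :
  k \notin supp_gate g -> agree_blk (pconj g E) E k.
Proof.
case: g => [i x z|i|i|c t] /=; rewrite ?inE ?negb_or;
  [ by [] | move=> /negbTE h q /=; by rewrite h
  | move=> /negbTE h q /=; by rewrite h addbF
  | move=> /andP [/negbTE h1 /negbTE h2] q /=; by rewrite h1 h2 !addbF].
Qed.

Lemma pconj_loc d n (g : gate n) (E F : ppauli d n) k :
  k \in supp_gate g -> (forall j, j \in supp_gate g -> agree_blk E F j) ->
  agree_blk (pconj g E) (pconj g F) k.
Proof.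
case: g => [i x z|i|i|c t] /=; rewrite ?inE.
- by move=> /eqP -> h; apply: h; rewrite inE.
- move=> /eqP -> h q /=; rewrite eqxx; have := h i; rewrite inE eqxx => /(_ isT) h'.
  by case: (h' (refl q)) => -> ->.
- move=> /eqP -> h q /=; rewrite eqxx; have := h i; rewrite inE eqxx => /(_ isT) h'.
  by case: (h' q) => -> ->; case: (h' (refl q)) => -> _.
- move=> hk h q /=.
  have hc : c \in [:: c; t] by rewrite !inE eqxx.
  have ht : t \in [:: c; t] by rewrite !inE eqxx orbT.
  have [hc1 hc2] := h c hc q; have [ht1 ht2] := h t ht q.
  have hk0 : k \in [:: c; t] by rewrite !inE.
  have [hk1 hk2] := h k hk0 q.
  by rewrite ?hc1 ?hc2 ?ht1 ?ht2 ?hk1 ?hk2.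
Qed.

Definition gact d n (og : option (gate n)) (E : ppauli d n) :=
  match og with Some g => pconj g E | None => E end.

Lemma layer_pconj_at d n (ly : seq (op n)) (E : ppauli d n) k :
  layer_ok ly -> agree_blk (layer_pconj ly E) (gact (gate_at ly k) E) k.
Proof.
rewrite /layer_ok; elim: ly k => [|o ly IH] k /=; first by [].
rewrite cat_uniq => /and3P [u1 u2 u3]; rewrite gate_at_cons.
case: o u1 u2 => [i s|g0|i b] /= u1 u2; try by apply: IH.
case: ifP => hk /=.
  apply: pconj_loc => // j hj.
  have hn : gate_at ly j = None.
    apply: gate_at_none; apply/negP => hj'; move/hasP: u2; apply; by exists j.
  by have := IH j u3; rewrite hn.
apply: agree_trans (IH k u3); apply: pconj_out; by rewrite hk.
Qed.

Definition agree_q n (P Q : lpauli n) (k : 'I_n) := lx P k = lx Q k /\ lz P k = lz Q k.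

Lemma lconj_out n (g : gate n) (P : lpauli n) k :
  k \notin supp_gate g -> agree_q (lconj g P) P k.
Proof.
case: g => [i x z|i|i|c t] /=; rewrite ?inE ?negb_or;
  [ by [] | move=> /negbTE h /=; by rewrite /agree_q /= h
  | move=> /negbTE h /=; by rewrite /agree_q /= h addbF
  | move=> /andP [/negbTE h1 /negbTE h2] /=; by rewrite /agree_q /= h1 h2 !addbF].
Qed.

Lemma lconj_loc n (g : gate n) (P Q : lpauli n) k :
  k \in supp_gate g -> (forall j, j \in supp_gate g -> agree_q P Q j) ->
  agree_q (lconj g P) (lconj g Q) k.
Proof.
case: g => [i x z|i|i|c t] /=; rewrite ?inE.
- by move=> /eqP -> h; apply: h; rewrite inE.
- move=> /eqP -> h; rewrite /agree_q /= eqxx.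
  by have [-> ->] := h i (mem_head _ _).
- move=> /eqP -> h; rewrite /agree_q /= eqxx.
  by have [-> ->] := h i (mem_head _ _).
- move=> hk h; rewrite /agree_q /=.
  have hc : c \in [:: c; t] by rewrite !inE eqxx.
  have ht : t \in [:: c; t] by rewrite !inE eqxx orbT.
  have hk0 : k \in [:: c; t] by rewrite !inE.
  have [hc1 hc2] := h c hc; have [ht1 ht2] := h t ht; have [hk1 hk2] := h k hk0.
  by rewrite ?hc1 ?hc2 ?ht1 ?ht2 ?hk1 ?hk2.
Qed.

Definition lact n (og : option (gate n)) (P : lpauli n) :=
  match og with Some g => lconj g P | None => P end.

Lemma layer_lconj_at n (ly : seq (op n)) (P : lpauli n) k :
  layer_ok ly -> agree_q (layer_lconj ly P) (lact (gate_at ly k) P) k.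
Proof.
rewrite /layer_ok; elim: ly k => [|o ly IH] k /=; first by [].
rewrite cat_uniq => /and3P [u1 u2 u3]; rewrite gate_at_cons.
case: o u1 u2 => [i s|g0|i b] /= u1 u2; try by apply: IH.
case: ifP => hk /=.
  apply: lconj_loc => // j hj.
  have hn : gate_at ly j = None.
    apply: gate_at_none; apply/negP => hj'; move/hasP: u2; apply; by exists j.
  by have := IH j u3; rewrite hn.
have [e1 e2] := IH k u3; have [e3 e4] := lconj_out (layer_lconj ly P) (negbT hk).
by rewrite /agree_q e3 e4.
Qed.


Definition acx d (ex : pos d -> bool) (s : pos d) :=
  \big[addb/false]_(q : pos d) (ex q && (isZs s && adj s q)).
Definition acz d (ez : pos d -> bool) (s : pos d) :=
  \big[addb/false]_(q : pos d) (ez q && (isXs s && adj s q)).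
Definition ac d (ex ez : pos d -> bool) (s : pos d) := acx ex s (+) acz ez s.

Lemma anticomm_gen d n (E : ppauli d n) i s :
  anticomm E (gen i s) = ac (px E i) (pz E i) s.
Proof.
rewrite /anticomm (bigD1 i) //=.
rewrite [X in _ (+) X]big1; last first.
  move=> j /negbTE hj; apply: big1 => q _ /=; by rewrite hj /= !andbF.
rewrite addbF /ac /acx /acz -big_split; apply: eq_bigr => q _ /=; by rewrite eqxx.
Qed.

Lemma refl_inv d (s : pos d) : refl (refl s) = s. Proof. by case: s. Qed.
Lemma refl_inj d : injective (@refl d). Proof. exact: (can_inj (@refl_inv d)). Qed.
Lemma isZs_refl d (s : pos d) : isZs (refl s) = isXs s.
Proof. by rewrite /isZs /isXs /= andbC. Qed.
Lemma isXs_refl d (s : pos d) : isXs (refl s) = isZs s.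
Proof. by rewrite /isZs /isXs /= andbC. Qed.
Lemma adj_refl d (s q : pos d) : adj s (refl q) = adj (refl s) q.
Proof. by rewrite /adj /= orbC. Qed.
Lemma XsZs d (s : pos d) : isXs s -> isZs s = false.
Proof. by rewrite /isXs /isZs; case: (odd s.1); case: (odd s.2). Qed.

Lemma acx_refl d (ex : pos d -> bool) s : acx (fun q => ex (refl q)) s = acz ex (refl s).
Proof.
rewrite /acx /acz (reindex_inj (@refl_inj d)); apply: eq_bigr => q _.
by rewrite refl_inv adj_refl -isZs_refl refl_inv.
Qed.
Lemma acz_refl d (ez : pos d -> bool) s : acz (fun q => ez (refl q)) s = acx ez (refl s).
Proof.
rewrite /acx /acz (reindex_inj (@refl_inj d)); apply: eq_bigr => q _.
by rewrite refl_inv adj_refl -isXs_refl refl_inv.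
Qed.

Lemma acx_ext d (a b : pos d -> bool) s : (forall q, a q = b q) -> acx a s = acx b s.
Proof. by move=> h; apply: eq_bigr => q _; rewrite h. Qed.
Lemma acz_ext d (a b : pos d -> bool) s : (forall q, a q = b q) -> acz a s = acz b s.
Proof. by move=> h; apply: eq_bigr => q _; rewrite h. Qed.
Lemma ac_ext d (a b a' b' : pos d -> bool) s :
  (forall q, a q = a' q) -> (forall q, b q = b' q) -> ac a b s = ac a' b' s.
Proof. by move=> h1 h2; rewrite /ac (acx_ext _ h1) (acz_ext _ h2). Qed.

Lemma acx_add d (a b : pos d -> bool) s : acx (fun q => a q (+) b q) s = acx a s (+) acx b s.
Proof. rewrite /acx -big_split /=; apply: eq_bigr => q _; case: (a q); case: (b q) => /=; by rewrite ?addbb ?addbF. Qed.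
Lemma acz_add d (a b : pos d -> bool) s : acz (fun q => a q (+) b q) s = acz a s (+) acz b s.
Proof. rewrite /acz -big_split /=; apply: eq_bigr => q _; case: (a q); case: (b q) => /=; by rewrite ?addbb ?addbF. Qed.
Lemma acx_nZ d (a : pos d -> bool) s : isZs s = false -> acx a s = false.
Proof. by move=> h; apply: big1 => q _; rewrite h andbF. Qed.
Lemma acz_nX d (a : pos d -> bool) s : isXs s = false -> acz a s = false.
Proof. by move=> h; apply: big1 => q _; rewrite h andbF. Qed.
Lemma acx0 d s : acx (fun _ : pos d => false) s = false.
Proof. by apply: big1. Qed.
Lemma acz0 d s : acz (fun _ : pos d => false) s = false.
Proof. by apply: big1. Qed.

Definition bpg d n (og : option (gate n)) (i : 'I_n) (s : pos d) : seq ('I_n * pos d) :=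
  match og with
  | Some (GH _) => [:: (i, refl s)]
  | Some (GS _) => if isXs s then [:: (i, s); (i, refl s)] else [:: (i, s)]
  | Some (GCNOT c tg) =>
      if ((i == tg) && isZs s) || ((i == c) && isXs s) then [:: (c, s); (tg, s)]
      else [:: (i, s)]
  | _ => [:: (i, s)]
  end.

Lemma bpgenE d n (ly : seq (op n)) i (s : pos d) : bpgen ly i s = bpg (gate_at ly i) i s.
Proof. by []. Qed.

Definition xorl T (F : T -> bool) (l : seq T) := foldr (fun x b => F x (+) b) false l.

Lemma xorl_ext T (F G : T -> bool) l : (forall x, F x = G x) -> xorl F l = xorl G l.
Proof. by move=> h; elim: l => //= x l ->; rewrite h. Qed.

Lemma xorl_has T (F : T -> bool) l : xorl F l -> has F l.
Proof. elim: l => //= x l IH; case: (F x) => //= /IH ->; by rewrite orbT. Qed.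

Lemma dual1 d n (g : gate n) (E : ppauli d n) i s :
  i \in supp_gate g -> uniq (supp_gate g) ->
  ac (px (pconj g E) i) (pz (pconj g E) i) s =
  xorl (fun js => ac (px E js.1) (pz E js.1) js.2) (bpg (Some g) i s).
Proof.
case: g => [i0 x z|i0|i0|c t] /=; rewrite ?inE.
- by move=> /eqP -> _; rewrite addbF.
- move=> /eqP -> _; rewrite eqxx addbF.
  by rewrite /ac acx_refl acz_refl addbC.
- move=> /eqP -> _; rewrite eqxx /ac.
  rewrite (acz_add (pz E i0) (fun q => px E i0 (refl q))) acz_refl.
  case hX: (isXs s) => /=; rewrite addbF.
    by rewrite (@acz_nX _ (pz E i0) (refl s)) ?isXs_refl ?XsZs // addbF addbA.
  by rewrite (@acx_nZ _ (px E i0) (refl s)) ?isZs_refl // addbF.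
- rewrite andbT => hi hct.
  case/orP: hi => /eqP ->.
  + rewrite eqxx (negbTE hct) /= /ac.
    rewrite (acx_ext _ (b := px E c)); last by move=> q; rewrite addbF.
    rewrite (acz_add (pz E c) (pz E t)).
    case hX: (isXs s) => /=.
      by rewrite (@acx_nZ _ (px E t)) ?XsZs // addbF addbA.
    by rewrite (@acz_nX _ (pz E t)) ?addbF.
  + have htc : (t == c) = false by rewrite eq_sym (negbTE hct).
    rewrite eqxx htc /= /ac.
    rewrite (acz_ext _ (b := pz E t)); last by move=> q; rewrite addbF.
    rewrite (acx_add (px E t) (px E c)).
    case hZ: (isZs s) => /=.
      have hX : isXs s = false by apply/negP => /XsZs; rewrite hZ.
      rewrite (@acz_nX _ (pz E c)) // addbF.
      by rewrite addbF [acx (px E t) s (+) _]addbC -addbA.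
    by rewrite (@acx_nZ _ (px E c)) ?addbF.
Qed.

Lemma dual_layer d n (ly : seq (op n)) (E : ppauli d n) i s :
  layer_ok ly ->
  anticomm (layer_pconj ly E) (gen i s) =
  xorl (fun js => anticomm E (gen js.1 js.2)) (bpgen ly i s).
Proof.
move=> hly; rewrite anticomm_gen bpgenE.
have hag := layer_pconj_at E i hly.
rewrite (ac_ext (a' := px (gact (gate_at ly i) E) i) (b' := pz (gact (gate_at ly i) E) i));
  try by move=> q; case: (hag q).
rewrite (xorl_ext _ (G := fun js => ac (px E js.1) (pz E js.1) js.2)); last first.
  by move=> js; rewrite anticomm_gen.
case h: (gate_at ly i) => [g|] /=; last by rewrite addbF.
have [hi _] := gate_at_supp h.
by apply: dual1 => //; apply: gate_uniq_supp h.
Qed.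


Lemma fwd_id d n (L : seq (seq (op n))) u (E : ppauli d n) : fwd L u u E = E.
Proof. by rewrite /fwd subnn. Qed.

Lemma fwd_lt d n (L : seq (seq (op n))) u t (E : ppauli d n) : t < u -> fwd L u t E = E.
Proof. by move=> h; rewrite /fwd (_ : t - u = 0) //; lia. Qed.

Lemma fwd_S d n (L : seq (seq (op n))) u t (E : ppauli d n) :
  u <= t -> fwd L u t.+1 E = layer_pconj (nth [::] L t.+1) (fwd L u t E).
Proof.
move=> h; rewrite /fwd (_ : t.+1 - u = (t - u) + 1); last by lia.
rewrite iotaD foldl_cat /= (_ : u.+1 + (t - u) = t.+1) //; lia.
Qed.

Lemma layer_pconj_notouch d n (ly : seq (op n)) (E : ppauli d n) k :
  ~~ has (touches_gate k) ly -> agree_blk (layer_pconj ly E) E k.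
Proof.
elim: ly => [|o ly IH] /=; first by [].
rewrite negb_or => /andP [h1 h2].
case: o h1 => [i s|g|i b] /= h1; try by apply: IH.
apply: agree_trans (IH h2); exact: pconj_out.
Qed.

Lemma fwd_support d n (L : seq (seq (op n))) u t (E : ppauli d n) k :
  (forall t', u < t' <= t -> ~~ has (touches_gate k) (nth [::] L t')) ->
  agree_blk (fwd L u t E) E k.
Proof.
elim: t => [|t IH] h.
  by rewrite /fwd /=.
have agr : agree_blk E E k by [].
case: (leqP u t) => hut.
  rewrite fwd_S //; apply: agree_trans (layer_pconj_notouch _ _) _.
    apply: h; lia.
  apply: IH => t' ht'; apply: h; lia.
case: (ltngtP u t.+1) => h2; try lia.
  by rewrite fwd_lt.
by rewrite -h2 fwd_id.
Qed.

Lemma flips_eq d n (L : seq (seq (op n))) (e : err d n (size L)) (t : 'I_(size L)) i s :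
  flips L e (t, i, s) =
  mflip L e (nat_of_ord t, i, s) (+)
  (if nat_of_ord t == initL L i then false
   else xorl (fun js => mflip L e (t.-1, js.1, js.2)) (bpgen (nth [::] L t) i s)).
Proof.
rewrite /flips /=; case: ifP => //= _.
by rewrite foldr_map.
Qed.

Lemma zero_blk d n (E : ppauli d n) k s :
  (forall q, px E k q = false /\ pz E k q = false) -> anticomm E (gen k s) = false.
Proof.
move=> h; rewrite anticomm_gen /ac.
rewrite (acx_ext _ (b := fun _ => false)); last by move=> q; case: (h q).
rewrite (acz_ext _ (b := fun _ => false)); last by move=> q; case: (h q).
by rewrite acx0 acz0.
Qed.

Lemma xorl_false T (l : seq T) : xorl (fun _ => false) l = false.
Proof. by elim: l. Qed.

Lemma wf_layer n (L : seq (seq (op n))) t : well_formed L -> t < size L -> layer_ok (nth [::] L t).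
Proof. by move=> [h _] ht; apply: (all_nthP [::] h). Qed.

Lemma wf_notouch n (L : seq (seq (op n))) k t :
  well_formed L -> t <= initL L k -> ~~ has (touches_gate k) (nth [::] L t).
Proof.
move=> [_ h] ht; have [_ [_ [_ h4]]] := h k.
case: (ltnP t (size L)) => hs.
  by apply/negP => /(h4 _ hs); lia.
by rewrite nth_default.
Qed.

Lemma core d n (L : seq (seq (op n))) (Hwf : well_formed L) (e : err d n (size L))
  (u : nat) (i' : 'I_n) (E : ppauli d n)
  (hm : forall t j s, mflip L e (t, j, s) = (u <= t) && anticomm (fwd L u t E) (gen j s))
  (hE : forall k, k != i' -> forall q, px E k q = false /\ pz E k q = false)
  (hu : initL L i' <= u)
  (t : 'I_(size L)) i s :
  initL L i <= t -> flips L e (t, i, s) -> [/\ u = t, i = i' & anticomm E (gen i s)].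
Proof.
have fin : anticomm E (gen i s) -> i = i'.
  move=> h; apply/eqP; apply/negP => /negP hne.
  by rewrite zero_blk in h; [| apply: hE].
move=> hit; rewrite flips_eq hm.
case: eqP => [ht|ht].
  rewrite addbF; case: (ltngtP u t) => hut //=.
  - have hne : i != i'.
      by apply/eqP => eii; rewrite eii in ht; lia.
    suff -> : anticomm (fwd L u t E) (gen i s) = false by [].
    have hag : agree_blk (fwd L u t E) E i.
      apply: fwd_support => t' ht'; apply: wf_notouch => //; lia.
    rewrite anticomm_gen.
    rewrite (ac_ext (a' := fun _ => false) (b' := fun _ => false)).
    + by rewrite /ac acx0 acz0.
    + by move=> q; have [-> _] := hag q; have [] := hE _ hne q.
    + by move=> q; have [_ ->] := hag q; have [] := hE _ hne q.
  - move=> h; rewrite -hut fwd_id in h *; split => //; exact: fin.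
have [t0 et] : exists t0, nat_of_ord t = t0.+1.
  by exists (nat_of_ord t).-1; lia.
rewrite (xorl_ext _ (G := fun js => (u <= t0) && anticomm (fwd L u t0 E) (gen js.1 js.2))); last first.
  by move=> js; rewrite et hm.
rewrite et.
case: (ltngtP u t0.+1) => hut /=.
- rewrite (xorl_ext _ (G := fun js => anticomm (fwd L u t0 E) (gen js.1 js.2))); last first.
    by move=> js; rewrite (_ : u <= t0) //; lia.
  rewrite fwd_S; last by lia.
  rewrite dual_layer ?addbb //.
  apply: wf_layer => //; rewrite -et; exact: ltn_ord.
- rewrite (xorl_ext _ (G := fun _ => false)) ?xorl_false // => js.
  by rewrite (_ : u <= t0 = false) //; lia.
- rewrite (xorl_ext _ (G := fun _ => false)); last first.
    by move=> js; rewrite (_ : u <= t0 = false) //; lia.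
  rewrite xorl_false addbF -hut fwd_id => h.
  split => //; exact: fin.
Qed.


Lemma xor_eq1 (T : finType) (a : T) : \big[addb/false]_(p : T) (p == a) = true.
Proof.
rewrite (bigD1 a) //= big1 ?addbF ?eqxx // => p; by case: eqP.
Qed.

Lemma odd_w (x : nat) : exists k, (odd x /\ x = k.*2.+1) \/ (odd x = false /\ x = k.*2).
Proof.
exists x./2; have := odd_double_half x; case: (odd x) => /= h; [left|right]; split => //; lia.
Qed.

Lemma grid_col d (s : pos d) :
  acx (fun p : pos d => (p.2 == 0 :> nat) && ~~ odd p.1) s = false.
Proof.
case hZ: (isZs s); last by apply: acx_nZ.
move: hZ; rewrite /isZs => /andP [o1 o2].
case: s o1 o2 => [s1 s2] /= o1 o2.
have hs1 := ltn_ord s1.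
have [k [[_ ek]|[ok _]]] := odd_w s1; last by rewrite ok in o1.
case: (eqVneq (nat_of_ord s2) 0) => hs2.
- have ha : s1.-1 < d.*2.-1 by lia.
  have hb : s1.+1 < d.*2.-1 by lia.
  have h0 : 0 < d.*2.-1 by lia.
  pose a : pos d := (Ordinal ha, Ordinal h0).
  pose b : pos d := (Ordinal hb, Ordinal h0).
  rewrite /acx (eq_bigr (fun p => (p == a) (+) (p == b))).
    by rewrite big_split /= !xor_eq1.
  case=> [p1 p2] _ /=.
  rewrite /a /b !xpair_eqE -!val_eqE /= /adj /=.
  have [k1 [[o1' e1]|[o1' e1]]] := odd_w p1; rewrite o1' /=.
  + by rewrite !andbF; repeat (case: eqP => /= ?); lia.
  all: rewrite /isZs /= ?o1 ?o2 /=.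
  all: repeat (case: eqP => /= ?); try done.
  all: try (exfalso; lia).
- apply: big1 => [[p1 p2]] _ /=; rewrite /adj /=.
  have [k1 [[o1' e1]|[o1' e1]]] := odd_w p1; rewrite o1' /=; first by rewrite andbF.
  move/eqP: hs2 => hs2.
  repeat (case: eqP => /= ?); try done.
  all: try (exfalso; lia).
  all: by rewrite andbF.
Qed.

Lemma anticomm_logrep d n (i : 'I_n) bx (s : pos d) :
  anticomm (logrep d i bx) (gen i s) = false.
Proof.
rewrite anticomm_gen /ac; case: bx.
- rewrite (acz_ext _ (b := fun _ => false)) ?acz0 ?addbF; last by move=> q; rewrite /= ?andbF.
  rewrite (acx_ext _ (b := fun p : pos d => (p.2 == 0 :> nat) && ~~ odd p.1)) ?grid_col //.
  by move=> q /=; rewrite eqxx.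
- rewrite (acx_ext _ (b := fun _ => false)); last by move=> q; rewrite /= ?andbF.
  rewrite acx0 /=.
  rewrite (acz_ext _ (b := fun p : pos d => (fun p : pos d => (p.2 == 0 :> nat) && ~~ odd p.1) (refl p))).
    by rewrite (acz_refl (fun p : pos d => (p.2 == 0 :> nat) && ~~ odd p.1)) grid_col.
  by move=> q /=; rewrite eqxx.
Qed.

Lemma xor_pt (T : finType) (q : T) (b : bool) (X : T -> bool) :
  \big[addb/false]_p ((b && (p == q)) && X p) = b && X q.
Proof.
rewrite (bigD1 q) //= eqxx andbT big1 ?addbF // => p hp; by rewrite (negbTE hp) andbF.
Qed.

Lemma anticomm_single d n (i : 'I_n) (q : pos d) bx (s : pos d) :
  anticomm (single i q bx) (gen i s) = (if bx then isZs s else isXs s) && adj s q.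
Proof.
rewrite anticomm_gen /ac.
rewrite (acx_ext _ (b := fun p => bx && (p == q))); last by move=> p; rewrite /= eqxx; case: (p == q); rewrite ?andbT ?andbF.
rewrite (acz_ext _ (b := fun p => ~~ bx && (p == q))); last by move=> p; rewrite /= eqxx; case: (p == q); rewrite ?andbT ?andbF.
rewrite /acx /acz !xor_pt.
by case: bx => /=; rewrite ?addbF.
Qed.

Lemma data_flip d n (L : seq (seq (op n))) (Hwf : well_formed L)
  (u : 'I_(size L)) i' (q : pos d) bx (t : 'I_(size L)) i s :
  active L i' u -> initL L i <= t -> flips L (inl (inl (u, i', q, bx))) (t, i, s) ->
  [/\ nat_of_ord u = t, i = i' & (if bx then isZs s else isXs s) && adj s q].
Proof.
move=> /andP [hu _] hit hf.
have hE : forall k, k != i' -> forall p, px (single i' q bx) k p = false /\ pz (single i' q bx) k p = false.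
  by move=> k hk p; rewrite /= (negbTE hk) !andbF.
have [h1 h2 h3] := core (e := inl (inl (u, i', q, bx))) (u := u) (i' := i') (E := single i' q bx) Hwf
  (fun t j s => erefl) hE hu hit hf.
split => //; rewrite -(anticomm_single i'); by rewrite h2 in h3.
Qed.

Lemma magic_noflip d n (L : seq (seq (op n))) (Hwf : well_formed L)
  i' bx (t : 'I_(size L)) i (s : pos d) :
  initL L i <= t -> flips L (inr (i', bx)) (t, i, s) = false.
Proof.
move=> hit; apply/negP => hf.
have hE : forall k, k != i' -> forall p, px (logrep d i' bx) k p = false /\ pz (logrep d i' bx) k p = false.
  by move=> k hk p; rewrite /= (negbTE hk) !andbF.
have [h1 h2 h3] := core (e := inr (i', bx)) (u := initL L i') (i' := i') (E := logrep d i' bx) Hwf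
  (fun t j s => erefl) hE (leqnn _) hit hf.
by rewrite h2 anticomm_logrep in h3.
Qed.


Lemma meas_flip d n (L : seq (seq (op n))) (u : 'I_(size L)) i' (s' : pos d)
  (t : 'I_(size L)) i s :
  initL L i <= t -> flips L (inl (inr (u, i', s'))) (t, i, s) ->
  (nat_of_ord u = t /\ i' = i /\ s' = s) \/
  (nat_of_ord t <> initL L i /\ nat_of_ord t = (nat_of_ord u).+1 /\
   (i', s') \in bpgen (nth [::] L t) i s).
Proof.
move=> hit; rewrite flips_eq /=.
case hh: ((u == t :> nat) && (i' == i) && (s' == s)).
  by move: hh => /andP [/andP [/eqP h1 /eqP h2] /eqP h3] _; left.
rewrite /=; case: eqP => // ht /xorl_has /hasP [[j s''] hm /=].
move=> /andP [/andP [/eqP h1 /eqP h2] /eqP h3]; right; split => //; split.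
  lia.
by rewrite h2 h3.
Qed.

Definition bpclass d n (og : option (gate n)) (i' j : 'I_n) (s' s'' : pos d) : Prop :=
  match og with
  | Some (GH _) => j = i' /\ s'' = refl s'
  | Some (GS _) => j = i' /\ (s'' = s' \/ (isXs s'' /\ s' = refl s''))
  | Some (GCNOT c tg) => (j = i' /\ s'' = s') \/
      (s'' = s' /\ ((i' == c) && (j == tg) && isZs s' || (i' == tg) && (j == c) && isXs s'))
  | _ => j = i' /\ s'' = s'
  end.

Lemma bpgen_mem d n (ly : seq (op n)) (i' j : 'I_n) (s' s'' : pos d) :
  layer_ok ly -> (i', s') \in bpgen ly j s'' -> bpclass (gate_at ly i') i' j s' s''.
Proof.
move=> hly; rewrite bpgenE.
case hj: (gate_at ly j) => [g|]; last first.
  by rewrite /= inE xpair_eqE => /andP [/eqP e1 /eqP e2]; subst; rewrite hj.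
have [hjs _] := gate_at_supp hj.
have hi' : forall x, x \in supp_gate g -> gate_at ly x = Some g.
  by move=> x hx; apply: gate_at_uniq hj hx.
case: g hj hjs hi' => [i0 x z|i0|i0|c tg] hj /= hjs hi'.
- rewrite inE xpair_eqE => /andP [/eqP e1 /eqP e2]; subst.
  by rewrite hj.
- rewrite inE xpair_eqE => /andP [/eqP e1 /eqP e2]; subst.
  by rewrite hj /= refl_inv.
- have hj0 : gate_at ly i' = Some (GS i0) -> bpclass (gate_at ly i') i' j s' s''
    -> True by [].
  case: ifP => hX; rewrite !inE !xpair_eqE.
  + case/orP => /andP [/eqP e1 /eqP e2]; subst; rewrite hj /=; split => //.
      by left.
    by right; split.
  + move=> /andP [/eqP e1 /eqP e2]; subst; rewrite hj /=; split => //; by left.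
- move: hjs; rewrite !inE => hjs.
  case: ifP => hc; rewrite !inE !xpair_eqE.
  + case/orP => /andP [/eqP e1 /eqP e2].
    * have hh : i' \in [:: c; tg] by rewrite e1 inE eqxx.
      rewrite (hi' i' hh) /= e1 -e2.
      case: (eqVneq j c) => [->|hjc]; [by left | right; split => //].
      by rewrite (negbTE hjc) /= orbF in hc; rewrite eqxx e2 hc.
    * have hh : i' \in [:: c; tg] by rewrite e1 !inE eqxx orbT.
      rewrite (hi' i' hh) /= e1 -e2.
      case: (eqVneq j tg) => [->|hjt]; [by left | right; split => //].
      by rewrite (negbTE hjt) /= in hc; rewrite eqxx e2 hc orbT.
  + move=> /andP [/eqP e1 /eqP e2].
    have hh : i' \in [:: c; tg] by rewrite e1 !inE.
    by rewrite (hi' i' hh) /=; left.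
Qed.

Lemma pmap_has (T : Type) (U : eqType) (f : T -> option U) (y : U) l :
  y \in pmap f l -> has (fun o => f o == Some y) l.
Proof.
elim: l => //= o l IH; case: (f o) => [x|] /=.
  by rewrite inE => /orP [/eqP ->|/IH ->]; rewrite ?eqxx ?orbT.
by move/IH.
Qed.

Lemma mlist_entry n (L : seq (seq (op n))) (j : nat) :
  j < nmeas L ->
  let: (q, bx, tj) := mnth L j in
  tj < size L /\ has (fun o => meas_of o == Some (q, bx)) (nth [::] L tj).
Proof.
move=> hj; have := mem_nth (0, false, 0) hj; rewrite -/(mnth L j).
case: (mnth L j) => [[q bx] tj] /flattenP [sq /mapP [t ht ->] /mapP [[q' b'] hqb [-> -> ->]]].
rewrite mem_iota in ht; split; first by lia.
by move: hqb; apply: pmap_has.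
Qed.

Lemma bp_S n (L : seq (seq (op n))) lo hi (P : lpauli n) :
  lo <= hi -> bp L lo hi P = layer_lconj (nth [::] L lo) (bp L lo.+1 hi P).
Proof.
move=> h; rewrite /bp (_ : hi.+1 - lo = (hi.+1 - lo.+1).+1); last by lia.
by rewrite /= rev_cons -cats1 foldl_cat.
Qed.

Lemma bp_nil n (L : seq (seq (op n))) lo (P : lpauli n) : bp L lo.+1 lo P = P.
Proof. by rewrite /bp subnn. Qed.

Definition comp n (b : bool) (k : 'I_n) (P : lpauli n) := if b then lx P k else lz P k.

Lemma comp_Pbar n (L : seq (seq (op n))) v t b k :
  comp b k (Pbar L v t) =
  \big[addb/false]_(j < nmeas L | v j ord0 != 0%R)
     (let: (q, bx, tj) := mnth L j in (t < tj) && comp b k (bp L t.+1 tj (obs n q bx))).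
Proof. by case: b. Qed.

Lemma comp_agree n (P Q : lpauli n) b k : agree_q P Q k -> comp b k P = comp b k Q.
Proof. by case=> h1 h2; case: b. Qed.

Lemma Pbar_step n (L : seq (seq (op n))) (Hwf : well_formed L) v u g
  (k0 : 'I_n) b0 b1 k1 b2 k2 :
  gate_at (nth [::] L u.+1) k0 = Some g -> k1 \in supp_gate g -> k2 \in supp_gate g ->
  (forall P, comp b0 k0 (lconj g P) = comp b1 k1 P (+) comp b2 k2 P) ->
  comp b0 k0 (Pbar L v u) = comp b1 k1 (Pbar L v u.+1) (+) comp b2 k2 (Pbar L v u.+1).
Proof.
move=> hg hk1 hk2 hlin.
have hsz : u.+1 < size L.
  case: (ltnP u.+1 (size L)) => // hge.
  by rewrite nth_default in hg.
have hly := wf_layer Hwf hsz.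
have hlay : forall P, comp b0 k0 (layer_lconj (nth [::] L u.+1) P) = comp b0 k0 (lconj g P).
  by move=> P; rewrite (comp_agree _ (layer_lconj_at P k0 hly)) hg.
rewrite !comp_Pbar -big_split /=; apply: eq_bigr => j _.
have := mlist_entry (ltn_ord j).
case: (mnth L j) => [[q bx] tj] [htj hmeas].
case: (ltngtP tj u.+1) => h.
- by [].
- by rewrite /= bp_S ?hlay ?hlin //; lia.
- subst tj; rewrite /= bp_S // bp_nil hlay hlin.
  have hz : forall b (k : 'I_n), k \in supp_gate g -> comp b k (obs n q bx) = false.
    move=> b k hk; have hkg := gate_at_uniq hly hg hk.
    have hnm := gate_at_meas hly hkg.
    case: (eqVneq (nat_of_ord k) q) => hkq.
      exfalso; move/negP: hnm; apply; move: hmeas; apply: sub_has.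
      by case=> //= i b' /eqP [e1 e2]; apply/eqP; apply: val_inj; rewrite /= e1 hkq.
    by clear hmeas; rewrite /comp /obs; case: b; case: bx => //=; apply/negbTE.
  by rewrite !hz.
Qed.


Lemma card_le2 (T : finType) (X : {set T}) (P1 P2 P3 : pred T) :
  (forall c, c \in X -> [|| P1 c, P2 c | P3 c]) ->
  (forall c c', P1 c -> P1 c' -> c = c') ->
  (forall c c', P2 c -> P2 c' -> c = c') ->
  (forall c c', P3 c -> P3 c' -> c = c') ->
  (forall c1 c2 c3, c1 \in X -> c2 \in X -> c3 \in X -> P1 c1 -> P2 c2 -> P3 c3 ->
     c2 != c3 -> False) ->
  #|X| <= 2.
Proof.
move=> hc u1 u2 u3 nt; rewrite leqNgt; apply/negP => /card_gt2P [x [y [z [[hx hy hz] [nxy nyz nzx]]]]].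
have nyx : y != x by rewrite eq_sym.
have nzy : z != y by rewrite eq_sym.
have nxz : x != z by rewrite eq_sym.
move: (hc x hx) (hc y hy) (hc z hz) => /or3P [ax|ax|ax] /or3P [ay|ay|ay] /or3P [az|az|az].
all: try by [ rewrite (u1 _ _ ax ay) eqxx in nxy | rewrite (u1 _ _ ay az) eqxx in nyz
            | rewrite (u1 _ _ az ax) eqxx in nzx
            | rewrite (u2 _ _ ax ay) eqxx in nxy | rewrite (u2 _ _ ay az) eqxx in nyz
            | rewrite (u2 _ _ az ax) eqxx in nzx
            | rewrite (u3 _ _ ax ay) eqxx in nxy | rewrite (u3 _ _ ay az) eqxx in nyz
            | rewrite (u3 _ _ az ax) eqxx in nzx ].
all: by [ apply: (nt x y z) | apply: (nt x z y) | apply: (nt y x z)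
        | apply: (nt y z x) | apply: (nt z x y) | apply: (nt z y x) ].
Qed.

Definition typ d (bx : bool) (s : pos d) := if bx then isZs s else isXs s.

Lemma grid_pair d bx (q s s' : pos d) :
  typ bx s -> typ bx s' -> adj s q -> adj s' q ->
  (s.1 + s.2 < q.1 + q.2) = (s'.1 + s'.2 < q.1 + q.2) -> s = s'.
Proof.
case: s s' q => [s1 s2] [t1 t2] [q1 q2] /=.
rewrite /typ /isZs /isXs /adj /=.
have [a1 [[oa1 ea1]|[oa1 ea1]]] := odd_w s1;
have [a2 [[oa2 ea2]|[oa2 ea2]]] := odd_w s2;
have [b1 [[ob1 eb1]|[ob1 eb1]]] := odd_w t1;
have [b2 [[ob2 eb2]|[ob2 eb2]]] := odd_w t2;
rewrite ?oa1 ?oa2 ?ob1 ?ob2; case: bx => //=.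
all: move=> _ _ h1 h2 h3; (have e1 : nat_of_ord s1 = t1 /\ nat_of_ord s2 = t2 by
   move: h1 h2 h3; repeat (case: eqP => /= ?); try done; lia);
  case: e1 => e1 e2; congr pair; apply: val_inj.
all: by [].
Qed.


Lemma size_bpg d n og (i : 'I_n) (s : pos d) : size (bpg og i s) <= 2.
Proof. by case: og => [[]|] //= *; repeat case: ifP. Qed.

Lemma size_check_meas d n (L : seq (seq (op n))) (c : chk d n (size L)) :
  size (check_meas L c) <= 3.
Proof.
case: c => [[t i] s] /=; case: ifP => //= _; rewrite size_map bpgenE.
by have := size_bpg (gate_at (nth [::] L t) i) i s.
Qed.

Lemma meas_in d n (L : seq (seq (op n))) (u : 'I_(size L)) i' (s' : pos d) c :
  flips L (inl (inr (u, i', s'))) c -> (nat_of_ord u, i', s') \in check_meas L c.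
Proof.
rewrite /flips; move: (check_meas L c) => l.
elim: l => //= me l IH; rewrite inE; case: me => [[t j] s] /=.
case h: ((u == t :> nat) && (i' == j) && (s' == s)).
  by move: h => /andP [/andP [/eqP -> /eqP ->] /eqP ->] _; rewrite eqxx.
by rewrite /= => /IH ->; rewrite orbT.
Qed.

Lemma adj_bounds d (s q : pos d) :
  adj s q -> [/\ q.1 + 1 - s.1 < 3, q.2 + 1 - s.2 < 3, s.1 <= q.1 + 1 & s.2 <= q.2 + 1].
Proof.
rewrite /adj; repeat (case: eqP => /= ?); try done; move=> _; split; lia.
Qed.

Lemma check_active d n (L : seq (seq (op n))) v (t : 'I_(size L)) i (s : pos d) :
  included L v (t, i, s) -> initL L i <= t.
Proof. by rewrite /included /is_check => /andP [/andP [/andP [/andP [h _] _] _] _]. Qed.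

Lemma vertex_deg d n (L : seq (seq (op n))) (Hwf : well_formed L) v (c : chk d n (size L)) :
  included L v c -> #|[set e : err d n (size L) | is_err L e && flips L e c]| <= 21.
Proof.
case: c => [[t i] s] hinc; have hit := check_active hinc.
move: (check_meas L (t, i, s)) (size_check_meas (t, i, s)) (fun u i1 s1 => @meas_in d n L u i1 s1 (t, i, s)) => cm hs hin.
pose f (e : err d n (size L)) : (('I_3 * 'I_3 * bool) + 'I_3)%type :=
  match e with
  | inl (inl (u, i', q, bx)) => inl (inord (q.1 + 1 - s.1), inord (q.2 + 1 - s.2), bx)
  | inl (inr (u, i', s')) => inr (inord (index (nat_of_ord u, i', s') cm))
  | inr _ => inr ord0
  end.
have -> : 21 = #|{: (('I_3 * 'I_3 * bool) + 'I_3)%type}|.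
  by rewrite card_sum !card_prod !card_ord card_bool.
apply: (@leq_card_in _ _ f) => e1 e2; rewrite !inE => /andP [he1 hf1] /andP [he2 hf2].
case: e1 he1 hf1 => [[[[[u1 i1] q1] b1]|[[u1 i1] s1]]|[i1 b1]] he1 hf1;
case: e2 he2 hf2 => [[[[[u2 i2] q2] b2]|[[u2 i2] s2]]|[i2 b2]] he2 hf2 //=;
  try (by rewrite magic_noflip in hf1); try (by rewrite magic_noflip in hf2).
- move/andP: he1 => [ha1 _]; move/andP: he2 => [ha2 _].
  have [eu1 ei1 hq1] := data_flip Hwf ha1 hit hf1.
  have [eu2 ei2 hq2] := data_flip Hwf ha2 hit hf2.
  case=> e_1 e_2 e_3.
  move/andP: hq1 => [_ /adj_bounds [x1 x2 x3 x4]].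
  move/andP: hq2 => [_ /adj_bounds [y1 y2 y3 y4]].
  move/(congr1 val): e_1; rewrite /= !inordK // => e_1.
  move/(congr1 val): e_2; rewrite /= !inordK // => e_2.
  have -> : u1 = u2 by apply: ord_inj; rewrite eu1 eu2.
  have -> : q1 = q2.
    case: q1 q2 e_1 e_2 x3 x4 y3 y4 {x1 x2 y1 y2 hf1 hf2} => [a1 a2] [c1 c2] /= e_1 e_2 x3 x4 y3 y4.
    congr pair; apply: ord_inj => /=; lia.
  by rewrite -ei1 -ei2 e_3.
- have m1 := hin _ _ _ hf1; have m2 := hin _ _ _ hf2.
  case=> /(congr1 (@nat_of_ord 3)); rewrite !inordK; first last.
  + by apply: leq_trans hs; rewrite index_mem.
  + by apply: leq_trans hs; rewrite index_mem.
  move=> ei.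
  have := nth_index (0, i, s) m1; rewrite ei nth_index // => [[eu -> ->]].
  by rewrite (ord_inj eu).
Qed.


Lemma adj_ne d (s q : pos d) : adj s q -> (s.1 + s.2 < q.1 + q.2) || (q.1 + q.2 < s.1 + s.2).
Proof. rewrite /adj; repeat (case: eqP => /= ?); try done; move=> _; apply/orP; lia. Qed.

Lemma data_edge d n (L : seq (seq (op n))) (Hwf : well_formed L) v
  (u : 'I_(size L)) i' (q : pos d) bx :
  is_err L (inl (inl (u, i', q, bx))) ->
  #|[set c : chk d n (size L) | included L v c && flips L (inl (inl (u, i', q, bx))) c]| <= 2.
Proof.
move=> /andP [ha _].
pose P1 (c : chk d n (size L)) := [&& nat_of_ord c.1.1 == u, c.1.2 == i', typ bx c.2,
   adj c.2 q & c.2.1 + c.2.2 < q.1 + q.2].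
pose P2 (c : chk d n (size L)) := [&& nat_of_ord c.1.1 == u, c.1.2 == i', typ bx c.2,
   adj c.2 q & q.1 + q.2 < c.2.1 + c.2.2].
apply: (@card_le2 _ _ P1 P2 xpred0).
- move=> [[t i] s]; rewrite inE => /andP [hinc hf].
  have [e1 e2 /andP [h3 h4]] := data_flip Hwf ha (check_active hinc) hf.
  rewrite /P1 /P2 /typ /= e1 e2 !eqxx h3 h4 /=.
  by case/orP: (adj_ne h4) => ->; rewrite ?orbT.
- move=> [[t i] s] [[t' i'0] s']; rewrite /P1 /P2 /= => /and5P [/eqP a1 /eqP a2 a3 a4 a5] /and5P [/eqP b1 /eqP b2 b3 b4 b5].

  rewrite (grid_pair a3 b3 a4 b4); last by rewrite a5 b5.
  have ett : t = t' by apply: ord_inj; rewrite a1 b1.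
  by subst.
- move=> [[t i] s] [[t' i'0] s']; rewrite /P1 /P2 /= => /and5P [/eqP a1 /eqP a2 a3 a4 a5] /and5P [/eqP b1 /eqP b2 b3 b4 b5].

  rewrite (grid_pair a3 b3 a4 b4); last first.
    by rewrite ltnNge (ltnW a5) [in RHS]ltnNge (ltnW b5).
  have ett : t = t' by apply: ord_inj; rewrite a1 b1.
  by subst.
- by [].
- by [].
Qed.

Lemma magic_edge d n (L : seq (seq (op n))) (Hwf : well_formed L) v i' bx :
  #|[set c : chk d n (size L) | included L v c && flips L (inr (i', bx)) c]| <= 2.
Proof.
apply: (@card_le2 _ _ xpred0 xpred0 xpred0) => //.
move=> [[t i] s]; rewrite inE => /andP [hinc hf].
by rewrite magic_noflip // in hf; apply: check_active hinc.
Qed.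


Definition atc d n T (t0 : nat) (j0 : 'I_n) (s0 : pos d) (c : chk d n T) : bool :=
  [&& nat_of_ord c.1.1 == t0, c.1.2 == j0 & c.2 == s0].

Lemma atcP d n T t0 j0 (s0 : pos d) (c : chk d n T) :
  atc t0 j0 s0 c -> [/\ nat_of_ord c.1.1 = t0, c.1.2 = j0 & c.2 = s0].
Proof. by case/and3P => /eqP -> /eqP -> /eqP ->. Qed.

Lemma atc_uniq d n T t0 j0 (s0 : pos d) (c c' : chk d n T) :
  atc t0 j0 s0 c -> atc t0 j0 s0 c' -> c = c'.
Proof.
case: c c' => [[t i] s] [[t' i'] s'] /atcP [/= e1 e2 e3] /atcP [/= f1 f2 f3].
have ett : t = t' by apply: ord_inj; rewrite e1 f1.
by subst.
Qed.

Lemma atc_of d n T t0 j0 (s0 : pos d) (c : chk d n T) :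
  nat_of_ord c.1.1 = t0 -> c.1.2 = j0 -> c.2 = s0 -> atc t0 j0 s0 c.
Proof. by rewrite /atc => -> -> ->; rewrite !eqxx. Qed.

Lemma meas_edge d n (L : seq (seq (op n))) (Hwf : well_formed L) v
  (u : 'I_(size L)) i' (s' : pos d) :
  #|[set c : chk d n (size L) | included L v c && flips L (inl (inr (u, i', s'))) c]| <= 2.
Proof.
set X := [set c | _].
set ly := nth [::] L u.+1.
have cov : forall c, c \in X -> atc u i' s' c \/
    (nat_of_ord c.1.1 = u.+1 /\ bpclass (gate_at ly i') i' c.1.2 s' c.2).
  move=> [[t i] s]; rewrite inE => /andP [hinc hf]; have hit := check_active hinc.
  case: (meas_flip hit hf) => [[e1 [e2 e3]]|[hne [et hm]]].
    by left; apply: atc_of.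
  right; split => //=; rewrite /ly -et; apply: bpgen_mem => //.
  exact: wf_layer Hwf (ltn_ord t).
have inc : forall c, c \in X -> comp (isXs c.2) c.1.2 (Pbar L v c.1.1).
  move=> [[t i] s]; rewrite inE => /andP [hinc _].
  by move: hinc; rewrite /included => /andP [_ h]; case: (isXs s) h.
have rnd : forall c, c \in X -> nat_of_ord c.1.1 = u.+1 -> atc u i' s' c -> False.
  by move=> c _ h /atcP [h' _ _]; rewrite h' in h; have := ltnn u; rewrite {2}h ltnSn.
case hog: (gate_at ly i') => [g|]; last first.
  apply: (@card_le2 _ _ (atc u i' s') (atc u.+1 i' s') xpred0) => //.
  - move=> c hc; case: (cov c hc) => [->//|[h1]]; rewrite hog => -[h2 h3].
    by rewrite (atc_of h1 h2 h3) orbT.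
  - exact: atc_uniq.
  - exact: atc_uniq.
have [hi'g _] := gate_at_supp hog.
have hly : layer_ok ly.
  have hsz : u.+1 < size L.
    case: (ltnP u.+1 (size L)) => // hge.
    by rewrite /ly nth_default in hog.
  exact: wf_layer Hwf hsz.
have hun := gate_uniq_supp hly hog.
case: g hog hi'g hun => [i0 x z|i0|i0|c0 tg] hog hi'g hun.
- apply: (@card_le2 _ _ (atc u i' s') (atc u.+1 i' s') xpred0) => //.
  + move=> c hc; case: (cov c hc) => [->//|[h1]]; rewrite hog => -[h2 h3].
    by rewrite (atc_of h1 h2 h3) orbT.
  + exact: atc_uniq.
  + exact: atc_uniq.
- apply: (@card_le2 _ _ (atc u i' s') (atc u.+1 i' (refl s')) xpred0) => //.
  + move=> c hc; case: (cov c hc) => [->//|[h1]]; rewrite hog => -[h2 h3].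
    by rewrite (atc_of h1 h2 h3) orbT.
  + exact: atc_uniq.
  + exact: atc_uniq.
- move: hi'g; rewrite inE => /eqP ei0; subst i0.
  apply: (@card_le2 _ _ (atc u i' s') (atc u.+1 i' s') (atc u.+1 i' (refl s'))).
  + move=> c hc; case: (cov c hc) => [->//|[h1]]; rewrite hog => -[h2 [h3|[h3 h4]]].
      by rewrite (atc_of h1 h2 h3) orbT.
    by rewrite (atc_of h1 h2 (_ : c.2 = refl s')) ?orbT // h4 refl_inv.
  + exact: atc_uniq.
  + exact: atc_uniq.
  + exact: atc_uniq.
  + move=> c1 c2 c3 h1 h2 h3 p1 p2 p3 n23.
    have [r3 j3 s3] := atcP p3.
    have hZ : isZs s'.
      case: (cov c3 h3) => [/(rnd c3 h3 r3)//|[_]].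
      rewrite hog j3 s3 => -[_ [e|[hX _]]]; last by rewrite isXs_refl in hX.
      move: n23; rewrite (atc_uniq p2 (_ : atc u.+1 i' s' c3)) ?eqxx //.
      by apply: atc_of; rewrite ?r3 ?j3 ?s3.
    have hX : isXs s' = false by apply/negP => /XsZs; rewrite hZ.
    have [r1 j1 s1] := atcP p1; have [r2 j2 s2] := atcP p2.
    have i1 := inc c1 h1; have i2 := inc c2 h2; have i3 := inc c3 h3.
    rewrite r1 j1 s1 hX in i1; rewrite r2 j2 s2 hX in i2.
    rewrite r3 j3 s3 isXs_refl hZ in i3.
    have := @Pbar_step n L Hwf v u (GS i') i' false false i' true i' hog
      (mem_head _ _) (mem_head _ _).
    rewrite i1 i2 i3 => /(_ _) h; suff: true = false by [].
    by apply: h => P; rewrite /comp /= eqxx.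
- have hct : c0 != tg by move: hun; rewrite /= inE andbT.
  pose o := if i' == c0 then tg else c0.
  apply: (@card_le2 _ _ (atc u i' s') (atc u.+1 i' s') (atc u.+1 o s')).
  + move=> c hc; case: (cov c hc) => [->//|[h1]]; rewrite hog => -[[h2 h3]|[h3 h4]].
      by rewrite (atc_of h1 h2 h3) orbT.
    rewrite (atc_of (j0 := o) h1 _ h3) ?orbT //.
    case/orP: h4 => /andP [/andP [/eqP e1 /eqP e2] _].
      by rewrite /o e1 eqxx.
    by rewrite /o e1 eq_sym (negbTE hct).
  + exact: atc_uniq.
  + exact: atc_uniq.
  + exact: atc_uniq.
  + move=> c1 c2 c3 h1 h2 h3 p1 p2 p3 n23.
    have [r3 j3 s3] := atcP p3.
    have [r1 j1 s1] := atcP p1; have [r2 j2 s2] := atcP p2.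
    have i1 := inc c1 h1; have i2 := inc c2 h2; have i3 := inc c3 h3.
    rewrite r1 j1 s1 in i1; rewrite r2 j2 s2 in i2; rewrite r3 j3 s3 in i3.
    have hoi : o != i'.
      by rewrite /o; case: (eqVneq i' c0) => [->|ne]; rewrite eq_sym.
    case: (cov c3 h3) => [/(rnd c3 h3 r3)//|[_]].
    rewrite hog j3 s3 => -[[eo _]|[_ hcond]]; first by rewrite eo eqxx in hoi.
    rewrite /o in hcond i3 hoi.
    have htc : (tg == c0) = false by rewrite eq_sym (negbTE hct).
    have htin : tg \in supp_gate (GCNOT c0 tg) by rewrite !inE eqxx orbT.
    move: hi'g; rewrite !inE => /orP [/eqP ec|/eqP et].
    * rewrite ec !eqxx (negbTE hct) /= in hcond i3 hoi i1 i2.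
      rewrite ec in hog.
      have hZ : isZs s' by move: hcond; rewrite orbF.
      have hX : isXs s' = false by apply/negP => /XsZs; rewrite hZ.
      rewrite hX in i1 i2 i3.
      have := @Pbar_step n L Hwf v u (GCNOT c0 tg) c0 false false c0 false tg hog
        (mem_head _ _) htin.
      rewrite i1 i2 i3 => /(_ _) h; suff: true = false by [].
      by apply: h => P; rewrite /comp /= eqxx.
    * rewrite et !eqxx htc /= in hcond i3 hoi i1 i2.
      rewrite et in hog.
      have hX : isXs s' by move: hcond; rewrite eqxx.
      rewrite hX in i1 i2 i3.
      have := @Pbar_step n L Hwf v u (GCNOT c0 tg) tg true true tg true c0 hog
        htin (mem_head _ _).
      rewrite i1 i2 i3 => /(_ _) h; suff: true = false by [].
      by apply: h => P; rewrite /comp /= eqxx.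
Qed.


Theorem lemma4 :
  exists C : nat,
  forall (d n : nat) (L : seq (seq (op n))), well_formed L ->
  forall v : 'cV['F_2]_(nmeas L), reliable L v ->
    (forall e : err d n (size L), is_err L e ->
       #|[set c : chk d n (size L) | included L v c && flips L e c]| <= 2) /\
    (forall c : chk d n (size L), included L v c ->
       #|[set e : err d n (size L) | is_err L e && flips L e c]| <= C).
Proof.
exists 21 => d n L Hwf v _; split.
- case=> [[[[[u i'] q] bx]|[[u i'] s']]|[i' bx]] he.
  + exact: data_edge.
  + exact: meas_edge.
  + exact: magic_edge.
- move=> c hc; exact: (vertex_deg Hwf hc).
Qed.
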